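(* Let $\alpha>0$ and let $f^+:[0,1]\to[0,1]$ with $f^+(0)=0$. If $ALG(uvw)\le\alpha\,LP(uvw)$ for every $(+,+,+)$-triangle whose edge lengths lie in $[0,1]$ and satisfy the triangle inequalities, then $f^+(x)\le 1-\sqrt{1-\alpha x}$ for every $x\in[0,1]$ with $\alpha x\le 1$.
   Context: A triangle $uvw$ has pairs $uv,vw,uw$, all positive edges in a $(+,+,+)$-triangle, with lengths $x_e\in[0,1]$; triangle inequalities: each length is at most the sum of the other two. Let $p_e=f^+(x_e)$. For a pair $(u,v)$ with third vertex $w$: $e.cost_w(u,v)=p_{uw}(1-p_{vw})+(1-p_{uw})p_{vw}$ and $e.lp_w(u,v)=(1-p_{uw}p_{vw})x_{uv}$. $ALG(uvw)=e.cost_w(u,v)+e.cost_v(w,u)+e.cost_u(v,w)$, $LP(uvw)=e.lp_w(u,v)+e.lp_v(w,u)+e.lp_u(v,w)$. *)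

(* Defs.v *)
From HB Require Import structures.
From mathcomp Require Import all_boot all_order all_algebra.
Set Implicit Arguments. Unset Strict Implicit. Unset Printing Implicit Defensive.
Import Order.TTheory GRing.Theory Num.Theory.
Local Open Scope ring_scope.

(* e.cost_w(u,v) = p_uw (1 - p_vw) + (1 - p_uw) p_vw,
   called as ecost p_uw p_vw. *)
Definition ecost (R : numDomainType) (p1 p2 : R) : R :=
  p1 * (1 - p2) + (1 - p1) * p2.

(* e.lp_w(u,v) = (1 - p_uw p_vw) x_uv, called as elp x_uv p_uw p_vw. *)
Definition elp (R : numDomainType) (x p1 p2 : R) : R :=
  (1 - p1 * p2) * x.

(* Triangle uvw with x_uv = a, x_vw = b, x_uw = c, and p_e = f x_e. *)
Definition ALG (R : numDomainType) (f : R -> R) (a b c : R) : R :=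
  ecost (f c) (f b)   (* e.cost_w(u,v): p_uw, p_vw *)
  + ecost (f b) (f a) (* e.cost_v(w,u): p_wv, p_uv *)
  + ecost (f a) (f c). (* e.cost_u(v,w): p_vu, p_wu *)

Definition LP (R : numDomainType) (f : R -> R) (a b c : R) : R :=
  elp a (f c) (f b)   (* e.lp_w(u,v) = (1 - p_uw p_vw) x_uv *)
  + elp c (f b) (f a) (* e.lp_v(w,u) = (1 - p_wv p_uv) x_wu *)
  + elp b (f a) (f c). (* e.lp_u(v,w) = (1 - p_vu p_wu) x_vw *)

Definition in01 (R : numDomainType) (x : R) : Prop := 0 <= x <= 1.

Definition triangle_ok (R : numDomainType) (a b c : R) : Prop :=
  in01 a /\ in01 b /\ in01 c /\ a <= b + c /\ b <= a + c /\ c <= a + b.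

(* Main.v *)
Require Import Defs.
From HB Require Import structures.
From mathcomp Require Import all_boot all_order all_algebra.
From mathcomp Require Import ring lra.
Import Order.TTheory GRing.Theory Num.Theory.
Local Open Scope ring_scope.

Theorem lemma5 (R : rcfType) (alpha : R) (f : R -> R)
  (halpha : 0 < alpha)
  (hf01 : forall x : R, in01 x -> in01 (f x))
  (hf0 : f 0 = 0)
  (hALG : forall a b c : R, triangle_ok a b c ->
            ALG f a b c <= alpha * LP f a b c) :
  forall x : R, in01 x -> alpha * x <= 1 ->
    f x <= 1 - Num.sqrt (1 - alpha * x).
Proof.
move=> x hx hax.
have [hx0 hx1] : 0 <= x /\ x <= 1 by move/andP: hx.
have tri : triangle_ok x x 0.
  rewrite /triangle_ok /in01.
  have e : 0 <= (0:R) <= 1 by rewrite lexx ler01.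
  do !split => //; lra.
have := hALG _ _ _ tri.
rewrite /ALG /LP /ecost /elp hf0.
have := hf01 x hx; rewrite /in01 => /andP [hp0 hp1].
set p := f x => H.
have E1 : 0 * (1 - p) + (1 - 0) * p + (p * (1 - p) + (1 - p) * p) + (p * (1 - 0) + (1 - p) * 0) = 4 * p - 2 * (p * p) by ring.
have E2 : (1 - 0 * p) * x + (1 - p * p) * 0 + (1 - p * 0) * x = 2 * x by ring.
have H2 : 1 - alpha * x <= (1 - p) ^+ 2.
  move: H; rewrite E1 E2 => H.
  have -> : (1 - p) ^+ 2 = (1 - alpha * x) + (alpha * (2 * x) - (4 * p - 2 * (p * p))) / 2.
    by rewrite expr2; field.
  rewrite -[X in X <= _]addr0 lerD2l; apply: divr_ge0; last by [].
  by rewrite subr_ge0.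
have h1p : 0 <= 1 - p by rewrite subr_ge0.
rewrite lerBrDl -lerBrDr.
rewrite -(ger0_norm h1p) -sqrtr_sqr.
by rewrite ler_sqrt // sqr_ge0.
Qed.
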